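(* (General model.) For every $p\ge 2$ there exists an in-tree task graph $T$ such that every schedule $S$ of $T$ on $p$ processors satisfies $$\frac{C_{\max}(S)}{C^*_p(T)}\cdot\frac{M(S)}{M^*_p(T)}\ \ge\ p;$$ hence no algorithm is both an $\alpha(p)$-approximation for makespan and a $\beta(p)$-approximation for peak memory with $\alpha(p)\beta(p)<p$. Moreover this bound is tight: for every in-tree $T$ and every $p$, a single-processor schedule (without idle time) of minimum peak memory has peak memory $M^*_p(T)$ and makespan at most $p\,C^*_p(T)$.
   Context: Model (general). An in-tree task graph $T$ has nodes $\{1,\dots,n\}$ and a root; every non-root node $i$ has a parent, and $\mathrm{Children}(i)$ is the set of children of $i$. Each node $i$ has an arbitrary processing time $w_i\ge 0$, execution-file size $n_i\ge 0$ and output-file size $f_i\ge 0$. A schedule on $p$ identical processors assigns each node $i$ a processor and a start time $\sigma_i\ge 0$; node $i$ runs without preemption during $[\sigma_i,\sigma_i+w_i)$, a processor runs at most one node at a time, and a node may start only after all its children have completed. The makespan is $C_{\max}=\max_i(\sigma_i+w_i)$. Memory: the output file of $i$ (size $f_i$) occupies memory from the start of $i$ until the completion of the parent of $i$ (for the root, until the end of the schedule), and the execution file of $i$ (size $n_i$) occupies memory while $i$ runs. The memory used at time $t$ is the total size of files present at time $t$; the peak memory $M(S)$ is the supremum over $t$ of the memory used. $C^*_p(T)$ denotes the minimum makespan and $M^*_p(T)$ the minimum peak memory over all schedules of $T$ on $p$ processors. *)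

(* Defs.v *)
From Stdlib Require Import Reals Lra List.
Import ListNotations.
Open Scope R_scope.

Record tree := mkTree {
  nn   : nat;
  root : nat;
  par  : nat -> option nat;
  w    : nat -> R;            (* processing times *)
  ex   : nat -> R;            (* execution-file sizes (n_i in the paper) *)
  out  : nat -> R             (* output-file sizes (f_i in the paper) *)
}.

Fixpoint iter_par (T : tree) (k : nat) (i : nat) : option nat :=
  match k with
  | O => Some i
  | S k' => match par T i with
            | None => None
            | Some j => iter_par T k' j
            end
  end.

Definition wf_tree (T : tree) : Prop :=
  (root T < nn T)%nat /\
  par T (root T) = None /\
  (forall i, (i < nn T)%nat -> i <> root T ->
     exists j, par T i = Some j /\ (j < nn T)%nat) /\
  (forall i, (i < nn T)%nat -> exists k, iter_par T k i = Some (root T)) /\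
  (forall i, (i < nn T)%nat -> 0 <= w T i /\ 0 <= ex T i /\ 0 <= out T i).

Definition child (T : tree) (j i : nat) : Prop :=
  (j < nn T)%nat /\ par T j = Some i.

Record schedule := mkSched {
  proc  : nat -> nat;
  sigma : nat -> R
}.

Definition running (T : tree) (S : schedule) (i : nat) (t : R) : Prop :=
  sigma S i <= t < sigma S i + w T i.

Definition valid (T : tree) (p : nat) (S : schedule) : Prop :=
  (forall i, (i < nn T)%nat -> (proc S i < p)%nat /\ 0 <= sigma S i) /\
  (forall i j t, (i < nn T)%nat -> (j < nn T)%nat -> i <> j ->
     proc S i = proc S j -> ~ (running T S i t /\ running T S j t)) /\
  (forall i j, (i < nn T)%nat -> child T j i ->
     sigma S j + w T j <= sigma S i).

Definition sumR (l : list R) : R := fold_right Rplus 0 l.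
Definition nodes (T : tree) : list nat := seq 0 (nn T).

Definition makespan (T : tree) (S : schedule) : R :=
  fold_right Rmax 0 (map (fun i => sigma S i + w T i) (nodes T)).

Definition ind (a b t : R) : R :=
  if Rle_dec a t then (if Rlt_dec t b then 1 else 0) else 0.

(* time until which the output file of i stays in memory *)
Definition out_end (T : tree) (S : schedule) (i : nat) : R :=
  match par T i with
  | Some j => sigma S j + w T j
  | None => makespan T S
  end.

Definition mem (T : tree) (S : schedule) (t : R) : R :=
  sumR (map (fun i => out T i * ind (sigma S i) (out_end T S i) t
                    + ex T i * ind (sigma S i) (sigma S i + w T i) t)
            (nodes T)).

Definition is_peak (T : tree) (S : schedule) (m : R) : Prop :=
  is_lub (fun x => exists t, x = mem T S t) m.

Definition is_min_makespan (T : tree) (p : nat) (c : R) : Prop :=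
  (exists S, valid T p S /\ makespan T S = c) /\
  (forall S, valid T p S -> c <= makespan T S).

Definition is_min_peak (T : tree) (p : nat) (m : R) : Prop :=
  (exists S mS, valid T p S /\ is_peak T S mS /\ mS = m) /\
  (forall S mS, valid T p S -> is_peak T S mS -> m <= mS).

Definition single_proc (T : tree) (S : schedule) : Prop :=
  exists q, forall i, (i < nn T)%nat -> proc S i = q.

Definition no_idle (T : tree) (S : schedule) : Prop :=
  forall t, 0 <= t < makespan T S ->
    exists i, (i < nn T)%nat /\ running T S i t.

(* Main.v *)
Require Import Defs.
From Stdlib Require Import Reals Lra Lia List Classical.
Import ListNotations.
Import Defs.
Open Scope R_scope.

Lemma sumR_cons x l : sumR (x :: l) = x + sumR l.
Proof. reflexivity. Qed.

Lemma sumR_app l1 l2 : sumR (l1 ++ l2) = sumR l1 + sumR l2.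
Proof. induction l1; cbn [app]; [unfold sumR; simpl; lra|]. rewrite !sumR_cons, IHl1. lra. Qed.


Lemma sumR_le {A} (f g : A -> R) l :
  (forall x, In x l -> f x <= g x) -> sumR (map f l) <= sumR (map g l).
Proof.
  induction l; cbn [map In]; intros H; [unfold sumR; simpl; lra|].
  rewrite !sumR_cons. specialize (IHl (fun x Hx => H x (or_intror Hx))).
  specialize (H a (or_introl eq_refl)). lra.
Qed.

Lemma sumR_plus {A} (f g : A -> R) l :
  sumR (map (fun x => f x + g x) l) = sumR (map f l) + sumR (map g l).
Proof. induction l; cbn [map In]; [unfold sumR; simpl; lra|]. rewrite !sumR_cons, IHl. lra. Qed.

Lemma sumR_nonneg {A} (f : A -> R) l :
  (forall x, In x l -> 0 <= f x) -> 0 <= sumR (map f l).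
Proof.
  intros H. apply Rle_trans with (sumR (map (fun _ => 0) l)).
  - clear H; induction l; cbn [map In]; [unfold sumR; simpl; lra|]. rewrite sumR_cons. lra.
  - apply sumR_le. auto.
Qed.

Lemma sumR_ge_elem {A} (f : A -> R) l a :
  (forall x, In x l -> 0 <= f x) -> In a l -> f a <= sumR (map f l).
Proof.
  induction l; cbn [map In]; intros H Ha; [contradiction|]. rewrite sumR_cons.
  destruct Ha as [->|Ha].
  - assert (0 <= sumR (map f l)) by (apply sumR_nonneg; auto). lra.
  - assert (0 <= f a0) by auto. specialize (IHl (fun x Hx => H x (or_intror Hx)) Ha). lra.
Qed.

Lemma sumR_zero {A} (f : A -> R) l :
  (forall x, In x l -> f x = 0) -> sumR (map f l) = 0.
Proof.
  induction l; cbn [map In]; intros H; [reflexivity|]. rewrite sumR_cons, H, IHl; auto. lra.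
Qed.

Lemma sumR_ind (a : nat) (c : R) l : In a l -> NoDup l ->
  sumR (map (fun k => if Nat.eq_dec k a then c else 0) l) = c.
Proof.
  induction l; cbn [map In]; intros Ha Hn; [contradiction|]. inversion Hn; subst.
  rewrite sumR_cons. destruct (Nat.eq_dec a0 a).
  - subst. rewrite sumR_zero; [lra|]. intros x Hx. destruct (Nat.eq_dec x a); [subst; contradiction|auto].
  - destruct Ha as [->|Ha]; [congruence|]. rewrite IHl; auto. lra.
Qed.

Lemma sumR_filter {A} (f : A -> R) (g : A -> bool) l :
  sumR (map f l) = sumR (map f (filter g l)) + sumR (map f (filter (fun x => negb (g x)) l)).
Proof.
  induction l; cbn [map In]; [unfold sumR; simpl; lra|]. cbn [filter]. destruct (g a); cbn [map negb]; rewrite !sumR_cons, IHl; lra.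
Qed.

Lemma sumR_const1 {A} (f : A -> R) l : (forall x, In x l -> f x = 1) -> sumR (map f l) = INR (length l).
Proof.
  induction l; cbn [map In]; intros H; [reflexivity|]. rewrite sumR_cons, H, IHl by auto.
  cbn [length]; rewrite S_INR; lra.
Qed.

Lemma sumR_remove_le (f : nat -> R) l e : (forall x, In x l -> 0 <= f x) -> In e l ->
  f e + sumR (map f (remove Nat.eq_dec e l)) <= sumR (map f l).
Proof.
  induction l; cbn [map In]; intros H He; [contradiction|]. rewrite sumR_cons.
  cbn [remove]. destruct (Nat.eq_dec e a).
  - subst. destruct (in_dec Nat.eq_dec a l).
    + specialize (IHl (fun x Hx => H x (or_intror Hx)) i). assert (0 <= f a) by auto. lra.
    + rewrite notin_remove by auto. lra.
  - destruct He as [->|He]; [congruence|]. cbn [map]. rewrite sumR_cons.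
    specialize (IHl (fun x Hx => H x (or_intror Hx)) He). lra.
Qed.

Lemma sumR_remove_eq (f : nat -> R) l e : NoDup l -> In e l ->
  sumR (map f l) = f e + sumR (map f (remove Nat.eq_dec e l)).
Proof.
  induction l; cbn [map In]; intros Hn He; [contradiction|]. inversion Hn; subst. rewrite sumR_cons.
  cbn [remove]. destruct (Nat.eq_dec e a).
  - subst. rewrite notin_remove by auto. lra.
  - destruct He as [->|He]; [congruence|]. cbn [map]. rewrite sumR_cons, IHl; auto. lra.
Qed.

Lemma sumR_swap {A B} (g : A -> B -> R) (l1 : list A) (l2 : list B) :
  sumR (map (fun x => sumR (map (fun y => g x y) l2)) l1) =
  sumR (map (fun y => sumR (map (fun x => g x y) l1)) l2).
Proof.
  induction l1; cbn [map].
  - rewrite sumR_zero; auto.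
  - rewrite sumR_cons, IHl1. rewrite <- sumR_plus. f_equal.
Qed.

Lemma fmax_ge0 l : 0 <= fold_right Rmax 0 l.
Proof. induction l; simpl; [lra|]. apply Rle_trans with (2 := Rmax_r _ _). auto. Qed.

Lemma fmax_ge l x : In x l -> x <= fold_right Rmax 0 l.
Proof.
  induction l; simpl; intros H; [contradiction|]. destruct H as [->|H].
  - apply Rmax_l.
  - apply Rle_trans with (2 := Rmax_r _ _). auto.
Qed.

Lemma fmax_le l B : 0 <= B -> (forall x, In x l -> x <= B) -> fold_right Rmax 0 l <= B.
Proof.
  induction l; simpl; intros H0 H; [lra|]. apply Rmax_lub; auto.
Qed.

Lemma fmax_in l : fold_right Rmax 0 l = 0 \/ In (fold_right Rmax 0 l) l.
Proof.
  induction l; simpl; [auto|]. destruct (Rle_dec a (fold_right Rmax 0 l)).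
  - rewrite Rmax_right by auto. destruct IHl as [->|H]; [left; reflexivity|tauto].
  - rewrite Rmax_left by lra. tauto.
Qed.

Lemma fmax_mono {A} (f g : A -> R) l : (forall x, In x l -> f x <= g x) ->
  fold_right Rmax 0 (map f l) <= fold_right Rmax 0 (map g l).
Proof.
  intros H. apply fmax_le; [apply fmax_ge0|]. intros x Hx. apply in_map_iff in Hx.
  destruct Hx as [y [<- Hy]]. apply Rle_trans with (g y); auto. apply fmax_ge. apply in_map; auto.
Qed.

Lemma argmax {A} (l : list A) (P : A -> Prop) (f : A -> R) :
  (exists x, In x l /\ P x) -> exists x, In x l /\ P x /\ forall y, In y l -> P y -> f y <= f x.
Proof.
  induction l as [|a l IH]; simpl; intros [x [Hx Px]]; [contradiction|].
  destruct (classic (exists x, In x l /\ P x)) as [E|NE].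
  - destruct (IH E) as [m [Hm [Pm Hmax]]].
    destruct (classic (P a /\ f m <= f a)) as [[Pa Ha]|Ha].
    + exists a. split; [auto|]. split; [auto|]. intros y [E1|Hy] Py; [subst; lra|].
      specialize (Hmax y Hy Py). lra.
    + exists m. split; [auto|]. split; [auto|]. intros y [E1|Hy] Py; [|auto]. subst y.
      destruct (Rle_dec (f a) (f m)); auto. exfalso. apply Ha. split; [auto|lra].
  - destruct Hx as [E1|Hx]; [subst x|exfalso; apply NE; eauto].
    exists a. split; [auto|]. split; [auto|]. intros y [E1|Hy] Py; [subst; lra|]. exfalso; apply NE; eauto.
Qed.

Lemma argmin {A} (l : list A) (P : A -> Prop) (f : A -> R) :
  (exists x, In x l /\ P x) -> exists x, In x l /\ P x /\ forall y, In y l -> P y -> f x <= f y.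
Proof.
  intros H. destruct (argmax l P (fun x => - f x) H) as [x [H1 [H2 H3]]].
  exists x. repeat split; auto. intros y Hy Py. specialize (H3 y Hy Py). lra.
Qed.

Definition cnt (L : list nat) (s : nat -> R) (t : R) :=
  sumR (map (fun j => ind (s j) (s j + 1) t) L).

Lemma ind_nonneg a b t : 0 <= ind a b t.
Proof. unfold ind; destruct (Rle_dec a t); destruct (Rlt_dec t b); lra. Qed.

Lemma ind_le1 a b t : ind a b t <= 1.
Proof. unfold ind; destruct (Rle_dec a t); destruct (Rlt_dec t b); lra. Qed.

Lemma ind_one a b t : a <= t < b -> ind a b t = 1.
Proof. intros [H1 H2]; unfold ind; destruct (Rle_dec a t); destruct (Rlt_dec t b); lra. Qed.

Lemma ind_zero a b t : ~ (a <= t < b) -> ind a b t = 0.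
Proof. intros H; unfold ind; destruct (Rle_dec a t); destruct (Rlt_dec t b); auto; exfalso; apply H; lra. Qed.

Lemma overlap : forall n L s C K a, (length L <= n)%nat ->
  (forall t, cnt L s t <= K) -> (forall j, In j L -> a <= s j /\ s j + 1 <= C) ->
  a <= C -> 0 <= K -> INR (length L) <= K * (C - a).
Proof.
  induction n; intros L s C K a Hl HK Hs HaC HK0.
  - destruct L; [simpl; nra|simpl in Hl; lia].
  - destruct L as [|x0 L0]; [simpl; nra|].
    set (L := x0 :: L0) in *.
    destruct (argmin L (fun _ => True) s) as [m [Hm [_ Hmin]]]; [exists x0; simpl; auto|].
    set (g := fun j => if Rlt_dec (s j) (s m + 1) then true else false).
    assert (Hlen := filter_length g L).
    set (A := filter g L) in *. set (B := filter (fun x => negb (g x)) L) in *.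
    assert (HmA : In m A). { apply filter_In. split; auto. unfold g. destruct (Rlt_dec (s m) (s m + 1)); auto; lra. }
    assert (HlB : (length B < length L)%nat).
    { assert (0 < length A)%nat by (destruct A; [contradiction|simpl; lia]). lia. }
    assert (HcntAB : forall t, cnt A s t + cnt B s t <= K).
    { intros t. unfold cnt, A, B. rewrite <- sumR_filter. apply HK. }
    assert (HB : INR (length B) <= K * (C - (s m + 1))).
    { apply (IHn B s C K (s m + 1)); auto.
      - lia.
      - intros t. specialize (HcntAB t). assert (0 <= cnt A s t).
        { apply sumR_nonneg. intros; apply ind_nonneg. } lra.
      - intros j Hj. unfold B in Hj. apply filter_In in Hj. destruct Hj as [Hj Hg].
        unfold g in Hg. destruct Rlt_dec; [discriminate|]. split; [lra|]. apply Hs; auto.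
      - apply Hs; auto. }
    assert (HA : INR (length A) <= K).
    { destruct (argmax A (fun _ => True) s) as [x1 [Hx1 [_ Hmax]]]; [exists m; auto|].
      specialize (HcntAB (s x1)).
      assert (0 <= cnt B s (s x1)) by (apply sumR_nonneg; intros; apply ind_nonneg).
      assert (cnt A s (s x1) = INR (length A)).
      { unfold cnt. apply sumR_const1. intros j Hj. apply ind_one. split; [apply Hmax; auto|].
        assert (Hj' := Hj). unfold A in Hj'. apply filter_In in Hj'. destruct Hj' as [HjL _].
        assert (Hx1' := Hx1). unfold A in Hx1'. apply filter_In in Hx1'. destruct Hx1' as [_ Hg].
        unfold g in Hg. destruct Rlt_dec; [|discriminate]. specialize (Hmin j HjL I). lra. }
      lra. }
    rewrite <- Hlen, plus_INR.
    assert (a <= s m) by (apply Hs; auto).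
    assert (K * (C - (s m + 1)) + K <= K * (C - a)) by nra. lra.
Qed.

Definition T1 (p : nat) : tree :=
  mkTree (S p) 0 (fun i => match i with 0 => None | _ => Some 0%nat end)
    (fun i => match i with 0 => 0 | _ => 1 end)
    (fun i => match i with 0 => 0 | _ => 1 end) (fun _ => 0).

Lemma T1_wf p : wf_tree (T1 p).
Proof.
  unfold wf_tree; simpl. repeat split.
  - lia.
  - intros i Hi Hr. destruct i; [congruence|]. exists 0%nat. split; auto; lia.
  - intros i Hi. destruct i; [exists 0%nat; reflexivity|]. exists 1%nat. reflexivity.
  - destruct i; lra.
  - destruct i; lra.
  - lra.
Qed.

Lemma mem_T1 p S t : mem (T1 p) S t = cnt (seq 1 p) (sigma S) t.
Proof.
  unfold mem, nodes, cnt. simpl nn. cbn [seq map]. rewrite sumR_cons.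
  simpl out. simpl ex. simpl w.
  replace (0 * _ + 0 * _) with 0 by ring. rewrite Rplus_0_l.
  f_equal. apply map_ext_in. intros a Ha. apply in_seq in Ha. destruct a; [lia|]. ring.
Qed.

Lemma le_makespan T S i : (i < nn T)%nat -> sigma S i + w T i <= makespan T S.
Proof.
  intros Hi. apply fmax_ge. apply in_map_iff. exists i. split; auto. apply in_seq. lia.
Qed.

Lemma mem_nonneg T S t : wf_tree T -> 0 <= mem T S t.
Proof.
  intros Hwf. unfold mem. apply sumR_nonneg. intros i Hi. apply in_seq in Hi.
  destruct Hwf as [_ [_ [_ [_ Hw]]]]. destruct (Hw i ltac:(lia)) as [_ [H1 H2]].
  assert (0 <= ind (sigma S i) (out_end T S i) t) by apply ind_nonneg.
  assert (0 <= ind (sigma S i) (sigma S i + w T i) t) by apply ind_nonneg. nra.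
Qed.

Lemma part1 : forall p : nat, (2 <= p)%nat ->
     exists T : tree, wf_tree T /\
       exists c m, is_min_makespan T p c /\ is_min_peak T p m /\
         forall S mS, valid T p S -> is_peak T S mS ->
           (makespan T S / c) * (mS / m) >= INR p.
Proof.
  intros p Hp. exists (T1 p). split; [apply T1_wf|]. exists 1, 1.
  assert (Hlow : forall S, valid (T1 p) p S -> 1 <= makespan (T1 p) S).
  { intros S [Hv _]. destruct (Hv 1%nat ltac:(simpl; lia)) as [_ H0].
    apply Rle_trans with (sigma S 1 + w (T1 p) 1); [simpl; lra|].
    apply le_makespan. simpl; lia. }
  split; [|split].
  - split.
    + exists (mkSched (fun i => match i with 0 => 0%nat | S k => k end)
                      (fun i => match i with 0 => 1 | _ => 0 end)).
      split.
      * repeat split.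
        -- destruct i; simpl in *; lia.
        -- destruct i; simpl; lra.
        -- intros i j t Hi Hj Hij Hpr [Ri Rj]. unfold running in *. simpl in *.
           destruct i; [lra|]. destruct j; [lra|]. lia.
        -- intros i j Hi [Hj Hpar]. simpl in *. destruct j; [discriminate|].
           injection Hpar as <-. lra.
      * apply Rle_antisym.
        -- apply fmax_le; [lra|]. intros x Hx. apply in_map_iff in Hx. destruct Hx as [i [<- _]].
           destruct i; simpl; lra.
        -- apply fmax_ge. apply in_map_iff. exists 0%nat. split; [simpl; lra|]. apply in_seq. simpl; lia.
    + intros S HS. apply Hlow; auto.
  - split.
    + exists (mkSched (fun _ => 0%nat) (fun i => match i with 0 => INR p | S k => INR k end)), 1.
      split; [|split; [|reflexivity]].
      * repeat split.
        -- simpl; lia.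
        -- destruct i; apply pos_INR.
        -- intros i j t Hi Hj Hij _ [Ri Rj]. unfold running in *. simpl in *.
           destruct i; [lra|]. destruct j; [lra|].
           assert (i < S j)%nat by (apply INR_lt; rewrite S_INR; lra).
           assert (j < S i)%nat by (apply INR_lt; rewrite S_INR; lra). lia.
        -- intros i j Hi [Hj Hpar]. simpl in *. destruct j; [discriminate|].
           injection Hpar as <-. apply le_INR in Hj. rewrite !S_INR in Hj. lra.
      * assert (Hsum : forall t n, cnt (seq 1 n) (fun i => match i with 0 => INR p | S k => INR k end) t
                          = ind 0 (INR n) t).
        { intros t n. induction n.
          - unfold cnt; simpl. unfold ind. destruct (Rle_dec 0 t); destruct (Rlt_dec t 0); lra.
          - unfold cnt in *. rewrite seq_S, map_app, sumR_app, IHn. cbn [map]. rewrite sumR_cons.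
            replace (1 + n)%nat with (S n) by lia. rewrite S_INR. unfold sumR; simpl fold_right.
            assert (0 <= INR n) by apply pos_INR. unfold ind. destruct (Rle_dec 0 t); destruct (Rlt_dec t (INR n));
            destruct (Rle_dec (INR n) t); destruct (Rlt_dec t (INR n + 1)); try lra.
            all: destruct (Rlt_dec t (INR n + 1)); lra. }
        split.
        -- intros x [t ->]. rewrite mem_T1. simpl sigma. rewrite Hsum. apply ind_le1.
        -- intros b Hb. apply Hb. exists 0. rewrite mem_T1. simpl sigma. rewrite Hsum.
           rewrite ind_one; auto. split; [lra|]. apply lt_0_INR. lia.
    + intros S mS HS [Hub _]. apply Rle_trans with (mem (T1 p) S (sigma S 1)); [|apply Hub; eauto].
      rewrite mem_T1. unfold cnt. apply Rle_trans with (ind (sigma S 1) (sigma S 1 + 1) (sigma S 1)); [rewrite ind_one; lra|].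
      apply (sumR_ge_elem (fun j => ind (sigma S j) (sigma S j + 1) (sigma S 1))).
      * intros; apply ind_nonneg.
      * apply in_seq; lia.
  - intros S mS HS [Hub _].
    assert (Hov := overlap (length (seq 1 p)) (seq 1 p) (sigma S) (makespan (T1 p) S) mS 0
                     (le_n _)).
    rewrite length_seq in Hov.
    assert (H0 : 0 <= mS).
    { apply Rle_trans with (mem (T1 p) S 0); [apply mem_nonneg, T1_wf|apply Hub; eauto]. }
    assert (INR p <= mS * (makespan (T1 p) S - 0)).
    { apply Hov; auto.
      - intros t. rewrite <- mem_T1. apply Hub; eauto.
      - intros j Hj. apply in_seq in Hj. destruct HS as [Hv _]. destruct (Hv j ltac:(simpl; lia)) as [_ H1].
        split; [auto|]. replace 1 with (w (T1 p) j) by (destruct j; [lia|reflexivity]).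
        apply le_makespan. simpl; lia.
      - apply fmax_ge0. }
    unfold Rdiv. rewrite Rinv_1, !Rmult_1_r. lra.
Qed.



Lemma NoDup_remove_nat (x : nat) l : NoDup l -> NoDup (remove Nat.eq_dec x l).
Proof.
  induction l; simpl; intros H; auto. inversion H; subst.
  destruct (Nat.eq_dec x a); auto. constructor; auto.
  intros Hin. apply in_remove in Hin. tauto.
Qed.

Lemma covering : forall n (L : list nat) (s ww : nat -> R) a C, (length L <= n)%nat ->
  (forall t, a <= t < C -> exists i, In i L /\ s i <= t < s i + ww i) ->
  (forall i, In i L -> 0 <= ww i) -> C - a <= sumR (map ww L).
Proof.
  induction n; intros L s ww a C Hl Hc Hw.
  - destruct L; [|simpl in Hl; lia].
    destruct (Rlt_dec a C) as [h|h]; [destruct (Hc a ltac:(lra)) as [i [[] _]]|].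
    unfold sumR; simpl; lra.
  - destruct (Rlt_dec a C) as [h|h].
    2:{ assert (0 <= sumR (map ww L)) by (apply sumR_nonneg; auto). lra. }
    destruct (Hc a ltac:(lra)) as [e [He [H1 H2]]].
    assert (Hrem := sumR_remove_le ww L e Hw He).
    assert (IH : C - (s e + ww e) <= sumR (map ww (remove Nat.eq_dec e L))).
    { apply (IHn _ s ww).
      - assert (Hlt := remove_length_lt Nat.eq_dec L e He). lia.
      - intros t Ht. destruct (Hc t ltac:(lra)) as [i [Hi Hi2]]. exists i. split; auto.
        apply in_in_remove; auto. intros ->. lra.
      - intros i Hi. apply in_remove in Hi. apply Hw; tauto. }
    lra.
Qed.

Lemma packing : forall n (L : list nat) (s ww : nat -> R) a C, (length L <= n)%nat -> NoDup L ->
  (forall i, In i L -> a <= s i /\ s i + ww i <= C /\ 0 < ww i) ->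
  (forall i j, In i L -> In j L -> i <> j -> s i + ww i <= s j \/ s j + ww j <= s i) ->
  a <= C -> sumR (map ww L) <= C - a.
Proof.
  induction n; intros L s ww a C Hl Hnd Hi Hdis HaC.
  - destruct L; [|simpl in Hl; lia]. unfold sumR; simpl; lra.
  - destruct L as [|x0 L0]; [unfold sumR; simpl; lra|].
    destruct (argmin (x0 :: L0) (fun _ => True) s) as [e [He [_ Hmin]]]; [exists x0; simpl; auto|].
    rewrite (sumR_remove_eq ww _ e Hnd He).
    destruct (Hi e He) as [Ha1 [Ha2 Ha3]].
    assert (IH : sumR (map ww (remove Nat.eq_dec e (x0 :: L0))) <= C - (s e + ww e)).
    { apply (IHn _ s ww).
      - assert (Hlt := remove_length_lt Nat.eq_dec _ e He). simpl in *. lia.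
      - apply NoDup_remove_nat; auto.
      - intros i Hir. apply in_remove in Hir. destruct Hir as [Hir Hne].
        destruct (Hi i Hir) as [B1 [B2 B3]]. split; [|split; auto].
        destruct (Hdis i e Hir He Hne) as [D|D]; auto.
        specialize (Hmin i Hir I). lra.
      - intros i j Hi' Hj' Hne. apply in_remove in Hi'. apply in_remove in Hj'.
        apply Hdis; tauto.
      - auto. }
    lra.
Qed.

Lemma sumR_const {A} (c : R) (l : list A) : sumR (map (fun _ => c) l) = INR (length l) * c.
Proof.
  induction l; cbn [map length]; [unfold sumR; simpl; lra|]. rewrite sumR_cons, IHl, S_INR. lra.
Qed.

Lemma disjoint_of_valid T p S i j : valid T p S -> (i < nn T)%nat -> (j < nn T)%nat -> i <> j ->
  proc S i = proc S j -> 0 < w T i -> 0 < w T j ->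
  sigma S i + w T i <= sigma S j \/ sigma S j + w T j <= sigma S i.
Proof.
  intros [_ [Hv _]] Hi Hj Hne Hp Hwi Hwj.
  destruct (Rle_dec (sigma S i + w T i) (sigma S j)); auto.
  destruct (Rle_dec (sigma S j + w T j) (sigma S i)); auto.
  exfalso. apply (Hv i j (Rmax (sigma S i) (sigma S j)) Hi Hj Hne Hp).
  unfold running. split; split.
  - apply Rmax_l.
  - unfold Rmax; destruct Rle_dec; lra.
  - apply Rmax_r.
  - unfold Rmax; destruct Rle_dec; lra.
Qed.

Lemma work_bound T p S : wf_tree T -> valid T p S ->
  sumR (map (w T) (nodes T)) <= INR p * makespan T S.
Proof.
  intros Hwf HS. set (C := makespan T S).
  assert (Hw0 : forall i, (i < nn T)%nat -> 0 <= w T i).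
  { intros i Hi. destruct Hwf as [_ [_ [_ [_ Hw]]]]. apply Hw; auto. }
  assert (E1 : sumR (map (w T) (nodes T)) =
     sumR (map (fun i => sumR (map (fun q => if Nat.eq_dec q (proc S i) then w T i else 0) (seq 0 p))) (nodes T))).
  { f_equal. apply map_ext_in. intros i Hi. unfold nodes in Hi. apply in_seq in Hi.
    rewrite sumR_ind; auto. 2: apply seq_NoDup. apply in_seq. destruct HS as [Hv _].
    destruct (Hv i ltac:(lia)). lia. }
  rewrite E1, sumR_swap.
  replace (INR p * C) with (sumR (map (fun _ : nat => C) (seq 0 p))) by (rewrite sumR_const, length_seq; reflexivity). apply sumR_le.
  intros q Hq.
  set (g := fun i => if Nat.eq_dec q (proc S i) then (if Rlt_dec 0 (w T i) then true else false) else false).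
  rewrite (sumR_filter _ g).
  rewrite (sumR_zero _ (filter (fun x => negb (g x)) (nodes T))).
  2:{ intros i Hi. apply filter_In in Hi. destruct Hi as [Hi Hg]. unfold g in Hg.
      destruct (Nat.eq_dec q (proc S i)); auto. destruct (Rlt_dec 0 (w T i)); [simpl in Hg; discriminate|].
      unfold nodes in Hi; apply in_seq in Hi. specialize (Hw0 i ltac:(lia)). lra. }
  rewrite Rplus_0_r.
  replace (sumR (map _ (filter g (nodes T)))) with (sumR (map (w T) (filter g (nodes T)))).
  2:{ f_equal. apply map_ext_in. intros i Hi. apply filter_In in Hi. destruct Hi as [_ Hg].
      unfold g in Hg. destruct (Nat.eq_dec q (proc S i)); [auto|discriminate]. }
  replace C with (C - 0) by lra.
  apply (packing (length (filter g (nodes T))) _ (sigma S) (w T)); auto.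
  - apply NoDup_filter, seq_NoDup.
  - intros i Hi. apply filter_In in Hi. destruct Hi as [Hi Hg]. unfold nodes in Hi; apply in_seq in Hi.
    unfold g in Hg. destruct (Nat.eq_dec q (proc S i)); [|discriminate].
    destruct (Rlt_dec 0 (w T i)); [|discriminate]. destruct HS as [Hv _].
    split; [apply Hv; lia|]. split; auto. apply le_makespan. lia.
  - intros i j Hi Hj Hne. apply filter_In in Hi. apply filter_In in Hj.
    destruct Hi as [Hi Hgi]. destruct Hj as [Hj Hgj]. unfold nodes in *; apply in_seq in Hi; apply in_seq in Hj.
    unfold g in Hgi, Hgj. destruct (Nat.eq_dec q (proc S i)); [|discriminate].
    destruct (Nat.eq_dec q (proc S j)); [|discriminate].
    destruct (Rlt_dec 0 (w T i)); [|discriminate]. destruct (Rlt_dec 0 (w T j)); [|discriminate].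
    apply (disjoint_of_valid T p S); auto; lia.
  - apply fmax_ge0.
Qed.

Lemma noidle_bound T S : wf_tree T -> no_idle T S -> makespan T S <= sumR (map (w T) (nodes T)).
Proof.
  intros Hwf Hni. replace (makespan T S) with (makespan T S - 0) by lra.
  apply (covering (length (nodes T)) _ (sigma S)); auto.
  - intros t Ht. destruct (Hni t Ht) as [i [Hi Hr]]. exists i. split; auto. unfold nodes; apply in_seq; lia.
  - intros i Hi. unfold nodes in Hi; apply in_seq in Hi. destruct Hwf as [_ [_ [_ [_ Hw]]]]. apply Hw; lia.
Qed.

Fixpoint psum (ww : nat -> R) (k : nat) (n : nat -> nat) : R :=
  match k with 0 => 0 | S k' => psum ww k' n + INR (n k') * ww k' end.

Fixpoint lv (ww : nat -> R) (N : nat) (k : nat) : list R :=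
  match k with
  | 0 => [0]
  | S k' => flat_map (fun v => map (fun m => v + INR m * ww k') (seq 0 (S N))) (lv ww N k')
  end.

Lemma psum_ext ww k n n' : (forall i, (i < k)%nat -> n i = n' i) -> psum ww k n = psum ww k n'.
Proof.
  induction k; simpl; intros H; auto. rewrite IHk by (intros; apply H; lia). rewrite H by lia. auto.
Qed.

Lemma lv_spec ww N k v : In v (lv ww N k) <-> exists n, (forall i, (i < k)%nat -> (n i <= N)%nat) /\ v = psum ww k n.
Proof.
  revert v; induction k; intros v; cbn [lv In psum].
  - split.
    + intros [<-|[]]. exists (fun _ => 0%nat). split; auto; intros; lia.
    + intros [n [_ ->]]. auto.
  - rewrite in_flat_map. split.
    + intros [u [Hu Hv]]. apply in_map_iff in Hv. destruct Hv as [m [<- Hm]]. apply in_seq in Hm.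
      apply IHk in Hu. destruct Hu as [n [Hn ->]].
      exists (fun i => if Nat.eq_dec i k then m else n i). split.
      * intros i Hi. destruct (Nat.eq_dec i k); [lia|]. apply Hn; lia.
      * destruct (Nat.eq_dec k k); [|congruence]. rewrite (psum_ext ww k (fun i => if Nat.eq_dec i k then m else n i) n); [reflexivity|].
        intros i Hi. destruct (Nat.eq_dec i k); [lia|auto].
    + intros [n [Hn ->]]. exists (psum ww k n). split.
      * apply IHk. exists n. split; auto.
      * apply in_map_iff. exists (n k). split; auto. apply in_seq. specialize (Hn k ltac:(lia)). lia.
Qed.

Lemma psum_nonneg ww k n : (forall i, (i < k)%nat -> 0 <= ww i) -> 0 <= psum ww k n.
Proof.
  induction k; simpl; intros H; [lra|]. assert (0 <= IZR 0 + 0) by lra.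
  specialize (IHk (fun i Hi => H i ltac:(lia))). assert (0 <= ww k) by (apply H; lia).
  assert (0 <= INR (n k)) by apply pos_INR. nra.
Qed.

Lemma psum_ge ww k n j : (forall i, (i < k)%nat -> 0 <= ww i) -> (j < k)%nat ->
  INR (n j) * ww j <= psum ww k n.
Proof.
  induction k; simpl; intros H Hj; [lia|].
  assert (0 <= ww k) by (apply H; lia). assert (0 <= INR (n k)) by apply pos_INR.
  destruct (Nat.eq_dec j k).
  - subst. assert (0 <= psum ww k n) by (apply psum_nonneg; intros; apply H; lia). lra.
  - assert (INR (n j) * ww j <= psum ww k n) by (apply IHk; [intros; apply H|]; lia). nra.
Qed.

Lemma psum_upd ww k n j : (j < k)%nat ->
  psum ww k (fun i => if Nat.eq_dec i j then S (n i) else n i) = psum ww k n + ww j.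
Proof.
  induction k; simpl; intros Hj; [lia|]. destruct (Nat.eq_dec k j).
  - subst. rewrite (psum_ext ww j _ n). 2:{ intros i Hi. destruct (Nat.eq_dec i j); [lia|auto]. }
    rewrite S_INR. ring.
  - rewrite IHk by lia. ring.
Qed.

Lemma lv_closed ww N k B v j : (forall i, (i < k)%nat -> 0 <= ww i) ->
  (forall i, (i < k)%nat -> 0 < ww i -> B < INR N * ww i) ->
  In v (lv ww N k) -> (j < k)%nat -> v + ww j <= B -> In (v + ww j) (lv ww N k).
Proof.
  intros H0 HN Hv Hj HB. destruct (Rlt_dec 0 (ww j)) as [hp|hz].
  2:{ replace (v + ww j) with v by (assert (0 <= ww j) by auto; lra). auto. }
  apply lv_spec in Hv. destruct Hv as [n [Hn ->]]. apply lv_spec.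
  exists (fun i => if Nat.eq_dec i j then S (n i) else n i). split.
  - intros i Hi. destruct (Nat.eq_dec i j); [|auto]. subst.
    destruct (Nat.eq_dec (S (n j)) (S N)) as [e|e]; [|specialize (Hn j Hi); lia].
    exfalso. assert (Hg := psum_ge ww k n j H0 Hj). specialize (HN j Hj hp).
    assert (INR (S (n j)) = INR (S N)) by (rewrite e; auto). rewrite !S_INR in *. nra.
  - rewrite psum_upd; auto.
Qed.

Definition flo (L : list R) (x : R) : R :=
  fold_right (fun v acc => if Rle_dec v x then Rmax v acc else acc) 0 L.

Lemma flo_le L x : 0 <= x -> flo L x <= x.
Proof.
  induction L; simpl; intros H; auto. destruct (Rle_dec a x); auto. apply Rmax_lub; auto.
Qed.

Lemma flo_ge0 L x : 0 <= flo L x.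
Proof.
  induction L; simpl; [lra|]. destruct (Rle_dec a x); auto. apply Rle_trans with (2 := Rmax_r _ _); auto.
Qed.

Lemma flo_max L x v : In v L -> v <= x -> v <= flo L x.
Proof.
  induction L; simpl; intros Hv Hx; [contradiction|]. destruct Hv as [->|Hv].
  - destruct (Rle_dec v x); [apply Rmax_l|lra].
  - destruct (Rle_dec a x); auto. apply Rle_trans with (2 := Rmax_r _ _); auto.
Qed.

Lemma flo_in L x : In 0 L -> In (flo L x) L.
Proof.
  intros H0. assert (flo L x = 0 \/ In (flo L x) L); [|destruct H; auto; rewrite H; auto].
  clear H0. induction L; simpl; auto. destruct (Rle_dec a x); [|destruct IHL; auto].
  unfold Rmax. destruct (Rle_dec a _); [destruct IHL; auto|auto].
Qed.

Lemma choose_N (ww : nat -> R) B k : exists N, forall i, (i < k)%nat -> 0 < ww i -> B < INR N * ww i.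
Proof.
  induction k.
  - exists 0%nat. intros; lia.
  - destruct IHk as [N HN]. destruct (INR_unbounded (B / ww k)) as [N' HN'].
    exists (Nat.max N N'). intros i Hi Hw.
    assert (INR N <= INR (Nat.max N N')) by (apply le_INR; lia).
    assert (INR N' <= INR (Nat.max N N')) by (apply le_INR; lia).
    destruct (Nat.eq_dec i k).
    + subst. apply Rmult_gt_compat_r with (r := ww k) in HN'; auto.
      unfold Rdiv in HN'. rewrite Rmult_assoc, Rinv_l, Rmult_1_r in HN' by lra. nra.
    + specialize (HN i ltac:(lia) Hw). nra.
Qed.

Definition shift (L : list R) (S : schedule) : schedule :=
  mkSched (proc S) (fun i => flo L (sigma S i)).

Lemma shift_valid T p S N B : wf_tree T ->
  (forall i, (i < nn T)%nat -> 0 < w T i -> B < INR N * w T i) ->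
  valid T p S -> makespan T S <= B ->
  valid T p (shift (lv (w T) N (nn T)) S) /\
  makespan T (shift (lv (w T) N (nn T)) S) <= makespan T S /\
  In (makespan T (shift (lv (w T) N (nn T)) S))
     (0 :: flat_map (fun v => map (fun i => v + w T i) (nodes T)) (lv (w T) N (nn T))).
Proof.
  intros Hwf HN HS HB. set (L := lv (w T) N (nn T)).
  assert (Hw0 : forall i, (i < nn T)%nat -> 0 <= w T i).
  { intros i Hi. destruct Hwf as [_ [_ [_ [_ Hw]]]]. apply Hw; auto. }
  assert (H0L : In 0 L). { apply lv_spec. exists (fun _ => 0%nat). split; [intros; lia|].
    clear. induction (nn T); simpl; [auto|]. rewrite <- IHn. simpl. ring. }
  destruct HS as [Hv1 [Hv2 Hv3]] eqn:HSe.
  assert (Key : forall i j, (j < nn T)%nat -> (i < nn T)%nat ->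
     sigma S j + w T j <= sigma S i -> flo L (sigma S j) + w T j <= flo L (sigma S i)).
  { intros i j Hj Hi H. apply flo_max.
    - apply lv_closed with (B := B); auto.
      + apply flo_in; auto.
      + assert (flo L (sigma S j) <= sigma S j) by (apply flo_le; apply Hv1; auto).
        assert (sigma S i + w T i <= makespan T S) by (apply le_makespan; auto).
        specialize (Hw0 i Hi). lra.
    - assert (flo L (sigma S j) <= sigma S j) by (apply flo_le; apply Hv1; auto). lra. }
  split; [|split].
  - repeat split.
    + apply Hv1; auto.
    + apply flo_ge0.
    + intros i j t Hi Hj Hne Hp [Ri Rj]. unfold running in *. simpl in *.
      assert (0 < w T i) by lra. assert (0 < w T j) by lra.
      destruct (disjoint_of_valid T p S i j HS Hi Hj Hne Hp) as [D|D]; auto.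
      * specialize (Key j i Hi Hj D). lra.
      * specialize (Key i j Hj Hi D). lra.
    + intros i j Hi [Hj Hpar]. simpl. apply Key; auto. apply Hv3; auto. split; auto.
  - apply fmax_mono. intros i Hi. simpl. unfold nodes in Hi. apply in_seq in Hi.
    assert (flo L (sigma S i) <= sigma S i) by (apply flo_le; apply Hv1; lia). lra.
  - destruct (fmax_in (map (fun i => sigma (shift L S) i + w T i) (nodes T))) as [E|E].
    + unfold makespan. rewrite E. left; auto.
    + right. unfold makespan. apply in_map_iff in E. destruct E as [i [Ei Hi]].
      rewrite <- Ei. apply in_flat_map. exists (flo L (sigma S i)). split.
      * apply flo_in; auto.
      * apply in_map_iff. exists i. split; auto.
Qed.

Lemma exists_opt T p : wf_tree T -> (exists S0, valid T p S0) -> exists c, is_min_makespan T p c.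
Proof.
  intros Hwf [S0 HS0]. set (B := makespan T S0).
  destruct (choose_N (w T) B (nn T)) as [N HN].
  set (L := lv (w T) N (nn T)).
  set (M := 0 :: flat_map (fun v => map (fun i => v + w T i) (nodes T)) L).
  destruct (argmin M (fun x => exists S, valid T p S /\ makespan T S = x) (fun x => x)) as [c [Hc [Pc Hmin]]].
  { destruct (shift_valid T p S0 N B Hwf HN HS0 (Rle_refl _)) as [V1 [V2 V3]].
    eexists; split; [exact V3|]. eexists; split; eauto. }
  exists c. split; auto. intros S HS.
  destruct (Rle_dec (makespan T S) B) as [hB|hB].
  - destruct (shift_valid T p S N B Hwf HN HS hB) as [V1 [V2 V3]].
    specialize (Hmin _ V3 (ex_intro _ _ (conj V1 eq_refl))). lra.
  - destruct (shift_valid T p S0 N B Hwf HN HS0 (Rle_refl _)) as [V1 [V2 V3]].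
    specialize (Hmin _ V3 (ex_intro _ _ (conj V1 eq_refl))). fold B in V2. lra.
Qed.

Definition bef (T : tree) (S : schedule) (j i : nat) : bool :=
  if Rlt_dec 0 (w T j) then
    (if Rlt_dec (sigma S j) (sigma S i) then true
     else if Req_dec_T (sigma S j) (sigma S i) then
            (if Rlt_dec 0 (w T i) then Nat.ltb j i else false)
          else false)
  else false.

Definition sg (T : tree) (S : schedule) (i : nat) : R :=
  sumR (map (fun j => if bef T S j i then w T j else 0) (nodes T)).

Definition seqS (T : tree) (S : schedule) : schedule := mkSched (fun _ => 0%nat) (sg T S).

Lemma bef_pos T S j i : bef T S j i = true -> 0 < w T j.
Proof. unfold bef. destruct (Rlt_dec 0 (w T j)); auto; discriminate. Qed.

Lemma bef_irrefl T S i : bef T S i i = false.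
Proof.
  unfold bef. destruct (Rlt_dec 0 (w T i)); auto. destruct (Rlt_dec (sigma S i) (sigma S i)); [lra|].
  destruct (Req_dec_T (sigma S i) (sigma S i)); auto. apply Nat.ltb_irrefl.
Qed.

Lemma bef_spec T S j i : bef T S j i = true <->
  0 < w T j /\ (sigma S j < sigma S i \/ (sigma S j = sigma S i /\ 0 < w T i /\ (j < i)%nat)).
Proof.
  unfold bef. destruct (Rlt_dec 0 (w T j)); [|split; [discriminate|lra]].
  destruct (Rlt_dec (sigma S j) (sigma S i)); [split; auto|].
  destruct (Req_dec_T (sigma S j) (sigma S i)); [|split; [discriminate|intros [_ [H|[H _]]]; lra]].
  destruct (Rlt_dec 0 (w T i)); [|split; [discriminate|intros [_ [H|[_ [H _]]]]; lra]].
  rewrite Nat.ltb_lt. split; [auto|]. intros [_ [H|[_ [_ H]]]]; [lra|auto].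
Qed.

Lemma bef_trans T S k j i : bef T S k j = true -> bef T S j i = true -> bef T S k i = true.
Proof.
  rewrite !bef_spec. intros [Hk H1] [Hj H2]. split; auto.
  destruct H1 as [H1|[H1 [_ H1']]]; destruct H2 as [H2|[H2 [H2' H2'']]]; try (left; lra).
  right. split; [lra|]. split; auto. lia.
Qed.

Lemma bef_total T S i j : 0 < w T i -> 0 < w T j -> i <> j -> bef T S i j = true \/ bef T S j i = true.
Proof.
  intros Hi Hj Hne. rewrite !bef_spec.
  destruct (Rtotal_order (sigma S i) (sigma S j)) as [H|[H|H]]; try (left; split; auto; fail);
  try (right; split; auto; fail).
  destruct (Nat.lt_gt_cases i j) as [[h|h] _]; auto.
  - left; split; auto; right; auto.
  - right; split; auto; right; auto.
Qed.

Lemma sg_nonneg T S i : wf_tree T -> 0 <= sg T S i.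
Proof.
  intros Hwf. unfold sg. apply sumR_nonneg. intros j Hj. unfold nodes in Hj; apply in_seq in Hj.
  destruct (bef T S j i); [|lra]. destruct Hwf as [_ [_ [_ [_ Hw]]]]. apply Hw; lia.
Qed.

Lemma w_nonneg T i : wf_tree T -> (i < nn T)%nat -> 0 <= w T i.
Proof. intros Hwf Hi. destruct Hwf as [_ [_ [_ [_ Hw]]]]. apply Hw; lia. Qed.

Lemma sg_mono T S a b : wf_tree T -> (forall k, (k < nn T)%nat -> bef T S k a = true -> bef T S k b = true) -> sg T S a <= sg T S b.
Proof.
  intros Hwf H. unfold sg. apply sumR_le. intros k Hk. unfold nodes in Hk; apply in_seq in Hk.
  destruct (bef T S k a) eqn:E1. rewrite H by (auto; lia). lra.
  destruct (bef T S k b); [apply w_nonneg; auto; lia|lra].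
Qed.

Lemma sg_strict T S a b : wf_tree T -> (a < nn T)%nat -> bef T S a b = true -> sg T S a + w T a <= sg T S b.
Proof.
  intros Hwf Ha Hab. unfold sg.
  rewrite <- (sumR_ind a (w T a) (nodes T)); [|unfold nodes; apply in_seq; lia|apply seq_NoDup].
  rewrite <- sumR_plus. apply sumR_le. intros k Hk.
  destruct (Nat.eq_dec k a).
  - subst. rewrite bef_irrefl, Hab. lra.
  - destruct (bef T S k a) eqn:E1.
    + rewrite (bef_trans T S k a b E1 Hab). lra.
    + destruct (bef T S k b); [|lra]. unfold nodes in Hk; apply in_seq in Hk. assert (0 <= w T k) by (apply w_nonneg; auto; lia). lra.
Qed.

Lemma sg_upper T S c a : wf_tree T -> (a < nn T)%nat ->
  (forall k, (k < nn T)%nat -> bef T S k c = true -> bef T S k a = true \/ k = a) -> sg T S c <= sg T S a + w T a.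
Proof.
  intros Hwf Ha H. unfold sg.
  rewrite <- (sumR_ind a (w T a) (nodes T)); [|unfold nodes; apply in_seq; lia|apply seq_NoDup].
  rewrite <- sumR_plus. apply sumR_le. intros k Hk. unfold nodes in Hk; apply in_seq in Hk.
  assert (0 <= w T k) by (apply w_nonneg; auto; lia).
  destruct (bef T S k c) eqn:E1.
  - destruct (H k ltac:(lia) E1) as [H1|H1].
    + rewrite H1. destruct (Nat.eq_dec k a); [subst; lra|lra].
    + subst. rewrite bef_irrefl. destruct (Nat.eq_dec a a); [lra|congruence].
  - destruct (bef T S k a); destruct (Nat.eq_dec k a); try lra; subst; lra.
Qed.

Lemma le_bef T S j i : wf_tree T -> (i < nn T)%nat -> (j < nn T)%nat -> 0 < w T i -> 0 < w T j ->
  sg T S j <= sg T S i -> j = i \/ bef T S j i = true.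
Proof.
  intros Hwf Hi Hj Hwi Hwj Hle. destruct (Nat.eq_dec j i); auto.
  destruct (bef_total T S j i Hwj Hwi n) as [h|h]; auto.
  assert (H := sg_strict T S i j Hwf Hi h). lra.
Qed.

Lemma seqS_valid T p S : wf_tree T -> (1 <= p)%nat -> valid T p S -> valid T p (seqS T S).
Proof.
  intros Hwf Hp HS. destruct HS as [Hv1 [Hv2 Hv3]] eqn:HSe.
  repeat split.
  - simpl; lia.
  - apply sg_nonneg; auto.
  - intros i j t Hi Hj Hne _ [Ri Rj]. unfold running in *; simpl in *.
    assert (0 < w T i) by lra. assert (0 < w T j) by lra.
    destruct (bef_total T S i j H H0 Hne) as [h|h].
    + assert (X := sg_strict T S i j Hwf Hi h). lra.
    + assert (X := sg_strict T S j i Hwf Hj h). lra.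
  - intros i j Hi [Hj Hpar]. simpl. assert (Hc := Hv3 i j Hi (conj Hj Hpar)).
    destruct (Rlt_dec 0 (w T j)) as [hp|hz].
    + apply sg_strict; auto. apply bef_spec. split; auto. left; lra.
    + assert (w T j = 0) by (assert (0 <= w T j) by (apply w_nonneg; auto); lra).
      rewrite H. rewrite Rplus_0_r. apply sg_mono; auto. intros k _ Hk.
      apply bef_spec in Hk. apply bef_spec. destruct Hk as [Hk [Hk2|[_ [Hk2 _]]]]; [|lra].
      split; auto. left; lra.
Qed.

Lemma seqS_noidle T p S : wf_tree T -> (1 <= p)%nat -> valid T p S -> no_idle T (seqS T S).
Proof.
  intros Hwf Hp HS t Ht.
  assert (HV := seqS_valid T p S Hwf Hp HS).
  assert (Hk0 : exists k0, (k0 < nn T)%nat /\ t < sg T S k0 + w T k0).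
  { destruct (fmax_in (map (fun i => sigma (seqS T S) i + w T i) (nodes T))) as [E|E].
    - unfold makespan in Ht. rewrite E in Ht. lra.
    - apply in_map_iff in E. destruct E as [k [Ek Hk]]. unfold makespan in Ht. rewrite <- Ek in Ht.
      exists k. unfold nodes in Hk; apply in_seq in Hk. split; [lia|exact (proj2 Ht)]. }
  destruct Hk0 as [k0 [Hk0 Ht0]].
  assert (Hpos : exists j, In j (nodes T) /\ 0 < w T j).
  { destruct (Rlt_dec 0 (w T k0)) as [h|h]; [exists k0; split; auto; unfold nodes; apply in_seq; lia|].
    assert (w T k0 = 0) by (assert (0 <= w T k0) by (apply w_nonneg; auto); lra).
    apply NNPP. intros HN. assert (sg T S k0 = 0).
    { unfold sg. apply sumR_zero. intros j Hj. destruct (bef T S j k0) eqn:E; auto.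
      exfalso; apply HN. exists j. split; auto. eapply bef_pos; eauto. }
    lra. }
  destruct (argmin (nodes T) (fun j => 0 < w T j) (sg T S) ltac:(destruct Hpos as [j Hj]; exists j; tauto))
    as [m [Hm [Hmp Hmin]]].
  assert (Hm0 : sg T S m = 0).
  { unfold sg. apply sumR_zero. intros j Hj. destruct (bef T S j m) eqn:E; auto. exfalso.
    unfold nodes in Hj; apply in_seq in Hj.
    assert (X := sg_strict T S j m Hwf ltac:(lia) E). assert (Y := Hmin j (proj2 (in_seq _ _ _) Hj) (bef_pos _ _ _ _ E)).
    assert (Z := bef_pos _ _ _ _ E). lra. }
  destruct (argmax (nodes T) (fun j => 0 < w T j /\ sg T S j <= t) (sg T S)) as [i [Hi [[Hip Hit] Hmax]]].
  { exists m. split; auto. split; auto. lra. }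
  unfold nodes in Hi; apply in_seq in Hi.
  destruct (Rlt_dec t (sg T S i + w T i)) as [hlt|hge].
  { exists i. split; [lia|]. unfold running. simpl. lra. }
  exfalso.
  destruct (classic (exists k, In k (nodes T) /\ 0 < w T k /\ sg T S i < sg T S k)) as [Ex|NEx].
  - destruct (argmin (nodes T) (fun k => 0 < w T k /\ sg T S i < sg T S k) (sg T S)
      ltac:(destruct Ex as [k Hk]; exists k; tauto)) as [k' [Hk' [[Hk'p Hk'g] Hmin']]].
    assert (sg T S k' > t).
    { destruct (Rlt_dec t (sg T S k')) as [h|h]; [lra|]. exfalso.
      assert (sg T S k' <= t) by lra. specialize (Hmax k' Hk' (conj Hk'p H)). lra. }
    assert (sg T S k' <= sg T S i + w T i).
    { apply sg_upper; auto; [lia|]. intros j HjT Hj.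
      assert (Hjp := bef_pos _ _ _ _ Hj).
      assert (Hk'T : (k' < nn T)%nat) by (unfold nodes in Hk'; apply in_seq in Hk'; lia).
      assert (Xj := sg_strict T S j k' Hwf HjT Hj).
      assert (sg T S j <= sg T S i).
      { destruct (Rle_dec (sg T S j) (sg T S i)) as [h|h]; auto. exfalso.
        assert (Hjn : In j (nodes T)) by (unfold nodes; apply in_seq; lia).
        assert (Hij : sg T S i < sg T S j) by (apply Rnot_le_lt; exact h). specialize (Hmin' j Hjn (conj Hjp Hij)). lra. }
      destruct (le_bef T S j i Hwf ltac:(lia) HjT Hip Hjp H0); auto. }
    lra.
  - assert (Hall : forall k, (k < nn T)%nat -> 0 < w T k -> k = i \/ bef T S k i = true).
    { intros k Hk Hkp. apply le_bef; auto; [lia|].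
      destruct (Rle_dec (sg T S k) (sg T S i)) as [h|h]; auto. exfalso. apply NEx.
      exists k. split; [unfold nodes; apply in_seq; lia|]. split; auto. lra. }
    assert (sg T S k0 + w T k0 <= sg T S i + w T i).
    { destruct (Rlt_dec 0 (w T k0)) as [h|h].
      - destruct (Hall k0 Hk0 h) as [->|h2]; [lra|].
        assert (X := sg_strict T S k0 i Hwf Hk0 h2). lra.
      - assert (w T k0 = 0) by (assert (0 <= w T k0) by (apply w_nonneg; auto); lra).
        rewrite H, Rplus_0_r. apply sg_upper; auto; [lia|]. intros j HjT Hj.
        destruct (Hall j HjT (bef_pos _ _ _ _ Hj)) as [->|h2]; auto. }
    lra.
Qed.

Lemma par_lt T k q : wf_tree T -> (k < nn T)%nat -> par T k = Some q -> (q < nn T)%nat.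
Proof.
  intros Hwf Hk Hq. destruct Hwf as [_ [Hr [Hp _]]].
  destruct (Nat.eq_dec k (root T)) as [->|hne]; [congruence|].
  destruct (Hp k Hk hne) as [j [Hj Hjn]]. congruence.
Qed.

Lemma seqS_mem T p S mS t : wf_tree T -> (1 <= p)%nat -> valid T p S -> is_peak T S mS ->
  mem T (seqS T S) t <= mS.
Proof.
  intros Hwf Hp HS [Hub _].
  assert (HV := seqS_valid T p S Hwf Hp HS).
  assert (HN := seqS_noidle T p S Hwf Hp HS).
  set (S' := seqS T S) in *.
  assert (Hm0 : 0 <= mS) by (apply Rle_trans with (mem T S 0); [apply mem_nonneg; auto|apply Hub; eauto]).
  destruct (Rle_dec 0 t) as [h0|h0].
  destruct (Rlt_dec t (makespan T S')) as [h1|h1].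
  - destruct (HN t (conj h0 h1)) as [i [Hi Ri]]. unfold running in Ri. simpl in Ri.
    assert (Hip : 0 < w T i) by lra.
    apply Rle_trans with (mem T S (sigma S i)); [|apply Hub; eauto].
    unfold mem. apply sumR_le. intros k Hk. unfold nodes in Hk; apply in_seq in Hk.
    destruct Hwf as [H1 [H2 [H3 [H4 Hw]]]] eqn:Hwfe. destruct (Hw k ltac:(lia)) as [Hwk [Hek Hok]].
    apply Rplus_le_compat.
    + apply Rmult_le_compat_l; auto.
      destruct (Rle_dec (sigma S' k) t) as [a1|a1]; [|rewrite ind_zero by lra; apply ind_nonneg].
      destruct (Rlt_dec t (out_end T S' k)) as [a2|a2]; [|rewrite ind_zero by lra; apply ind_nonneg].
      rewrite (ind_one (sigma S k)); [apply ind_le1|]. simpl in a1.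
      split.
      * destruct (Rle_dec (sigma S k) (sigma S i)) as [b|b]; auto. exfalso.
        assert (Hb : bef T S i k = true) by (apply bef_spec; split; auto; left; lra).
        assert (X := sg_strict T S i k Hwf Hi Hb). lra.
      * unfold out_end in *. destruct (par T k) as [q|] eqn:Hq.
        -- assert (HqT := par_lt T k q Hwf ltac:(lia) Hq). simpl in a2.
           destruct (Rlt_dec (sigma S i) (sigma S q + w T q)) as [b|b]; auto. exfalso.
           destruct (Rlt_dec 0 (w T q)) as [c|c].
           ++ assert (Hb : bef T S q i = true) by (apply bef_spec; split; auto; left; lra).
              assert (X := sg_strict T S q i Hwf HqT Hb). lra.
           ++ assert (w T q = 0) by (assert (0 <= w T q) by (apply w_nonneg; auto); lra).
              assert (sg T S q <= sg T S i).
              { apply sg_mono; auto. intros k' _ Hk'. apply bef_spec in Hk'. apply bef_spec.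
                destruct Hk' as [Hk' [Hk2|[_ [Hk2 _]]]]; [|lra]. split; auto. left; lra. }
              lra.
        -- assert (sigma S i + w T i <= makespan T S) by (apply le_makespan; auto). lra.
    + apply Rmult_le_compat_l; auto.
      destruct (Nat.eq_dec k i) as [->|hne].
      * rewrite (ind_one (sigma S i)) by lra. apply ind_le1.
      * rewrite ind_zero; [apply ind_nonneg|]. intros Rk. simpl in Rk.
        destruct HV as [_ [HV2 _]]. apply (HV2 k i t ltac:(lia) Hi hne eq_refl).
        unfold running. simpl. split; lra.
  -
    apply Rle_trans with 0; auto. unfold mem. rewrite sumR_zero; [lra|]. intros k Hk.
    unfold nodes in Hk; apply in_seq in Hk.
    assert (E1 : out_end T S' k <= makespan T S').
    { unfold out_end. destruct (par T k) as [q|] eqn:Hq; [|lra].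
      apply le_makespan. apply (par_lt T k q Hwf); auto; lia. }
    assert (E2 : sigma S' k + w T k <= makespan T S') by (apply le_makespan; lia).
    rewrite !ind_zero by lra. ring.
  - apply Rle_trans with 0; auto. unfold mem. rewrite sumR_zero; [lra|]. intros k Hk.
    assert (0 <= sigma S' k) by (apply sg_nonneg; auto).
    rewrite !ind_zero by lra. ring.
Qed.

Lemma part2a T p (mS : R) : wf_tree T -> (1 <= p)%nat ->
  (forall S' mS', valid T p S' -> single_proc T S' -> no_idle T S' -> is_peak T S' mS' -> mS <= mS') ->
  forall S2 mS2, valid T p S2 -> is_peak T S2 mS2 -> mS <= mS2.
Proof.
  intros Hwf Hp Hmin S2 mS2 HS2 Hpk.
  assert (Hbd : forall t, mem T (seqS T S2) t <= mS2) by (intros; eapply seqS_mem; eauto).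
  destruct (completeness (fun x => exists t, x = mem T (seqS T S2) t)) as [m Hm].
  - exists mS2. intros x [t ->]. auto.
  - exists (mem T (seqS T S2) 0). eauto.
  - assert (mS <= m).
    { apply (Hmin (seqS T S2)); auto.
      + apply seqS_valid; auto.
      + exists 0%nat. intros; reflexivity.
      + eapply seqS_noidle; eauto. }
    assert (m <= mS2). { destruct Hm as [_ Hm]. apply Hm. intros x [t ->]. auto. }
    lra.
Qed.

Theorem lemma2 :
  (forall p : nat, (2 <= p)%nat ->
     exists T : tree, wf_tree T /\
       exists c m, is_min_makespan T p c /\ is_min_peak T p m /\
         forall S mS, valid T p S -> is_peak T S mS ->
           (makespan T S / c) * (mS / m) >= INR p)
  /\
  (forall (T : tree) (p : nat), wf_tree T -> (1 <= p)%nat ->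
     forall S mS, valid T p S -> single_proc T S -> no_idle T S ->
       is_peak T S mS ->
       (forall S' mS', valid T p S' -> single_proc T S' -> no_idle T S' ->
          is_peak T S' mS' -> mS <= mS') ->
       is_min_peak T p mS /\
       exists c, is_min_makespan T p c /\ makespan T S <= INR p * c).
Proof.
  split; [exact part1|].
  intros T p Hwf Hp S mS HS Hsp Hni Hpk Hmin. split.
  - split.
    + exists S, mS. auto.
    + apply part2a; auto.
  - destruct (exists_opt T p Hwf (ex_intro _ S HS)) as [c Hc]. exists c. split; auto.
    destruct Hc as [[So [HSo <-]] _].
    apply Rle_trans with (sumR (map (w T) (nodes T))).
    + apply noidle_bound; auto.
    + apply work_bound; auto.
Qed.
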